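(* Let $X$ be a linearly ordered set (of arbitrary cardinality) and let $k,n\geq 3$ be odd natural numbers. Then $\mathrm{med}_k\in\langle\{\mathrm{med}_n\}\rangle$. Equivalently, every clone on $X$ contains either no median function or all median functions $\mathrm{med}_m$, $m\ge 3$ odd.
   Context: For a set $X$, $\mathscr O^{(n)}$ denotes the set of all $n$-ary functions $X^n\to X$ and $\mathscr O=\bigcup_{n\ge1}\mathscr O^{(n)}$. A clone on $X$ is a subset of $\mathscr O$ containing all projections and closed under composition. For $\mathscr F\subseteq\mathscr O$, $\langle\mathscr F\rangle$ is the smallest clone containing $\mathscr F$. Let $X$ be linearly ordered by $<$. For $n\ge1$ and $1\le k\le n$, $m^n_k(x_1,\dots,x_n)=x_{j_k}$ where $x_{j_1}\le\dots\le x_{j_n}$ (i.e. $m^n_k$ returns the $k$-th smallest entry). For odd $n$, the $n$-th median function is $\mathrm{med}_n=m^n_{(n+1)/2}$. *)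

(* Defs.v *)
From mathcomp Require Import all_boot all_order.
Set Implicit Arguments. Unset Strict Implicit. Unset Printing Implicit Defensive.
Import Order.TTheory.
Local Open Scope order_scope.

Definition op (X : Type) (n : nat) := ('I_n -> X) -> X.

Definition opset (X : Type) := forall n : nat, op X n -> Prop.

Definition proj (X : Type) (n : nat) (i : 'I_n) : op X n := fun x => x i.

Definition comp (X : Type) (m n : nat) (f : op X m) (g : 'I_m -> op X n)
  : op X n := fun x => f (fun i => g i x).

Definition is_clone (X : Type) (C : opset X) : Prop :=
  [/\ forall f : op X 0, ~ C 0 f,
      forall n (i : 'I_n), C n (proj i) &
      forall m n (f : op X m) (g : 'I_m -> op X n),
        C m f -> (forall i, C n (g i)) -> C n (comp f g)].

Definition gen_clone (X : Type) (F : opset X) : opset X :=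
  fun n f => forall C : opset X, is_clone C ->
    (forall m g, F m g -> C m g) -> C n f.

(* m^{n+1}_k : the k-th smallest entry (1 <= k <= n+1) of an (n+1)-tuple. *)
Definition kth_smallest d (X : orderType d) (n k : nat) (x : 'I_n.+1 -> X) : X :=
  nth (x ord0) (sort <=%O (codom x)) k.-1.

(* med_{2j+1} = m^{2j+1}_{j+1}. *)
Definition med d (X : orderType d) (j : nat) : op X j.*2.+1 :=
  @kth_smallest d X j.*2 j.+1.

Definition single_op (X : Type) (n : nat) (f : op X n) : opset X :=
  fun m g => exists e : m = n, eq_rect m (op X) g n e = f.

(* Main.v *)
Require Import Defs.
From mathcomp Require Import all_boot all_order.
From Stdlib Require Import FunctionalExtensionality.
From mathcomp Require Import zify.
Set Implicit Arguments. Unset Strict Implicit. Unset Printing Implicit Defensive.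
Import Order.TTheory.
Local Open Scope order_scope.

Section S.
Variables (d : Order.disp_t) (X : orderType d).

Lemma sorted_thr (s : seq X) x0 k t : sorted <=%O s -> (k < size s)%N ->
  (t <= nth x0 s k) = leq (size s - k)%N (count (fun y => t <= y) s).
Proof.
move=> ss ks.
have mono : forall i j, (i <= j)%N -> (j < size s)%N -> nth x0 s i <= nth x0 s j.
  move=> i j ij js; apply: (sorted_leq_nth le_trans le_refl x0 ss) => //.
  rewrite inE; exact: leq_ltn_trans js.
rewrite -[X in count _ X](cat_take_drop k s) count_cat.
apply/idP/idP => H.
- have : all (fun y => t <= y) (drop k s).
    apply/(all_nthP x0) => i; rewrite size_drop nth_drop => hi.
    apply: le_trans H _; apply: mono; lia.
  rewrite all_count => /eqP ->; rewrite size_drop; idtac.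
 exact: leq_addl.
- rewrite leNgt; apply/negP => H2.
  have : ~~ has (fun y => t <= y) (take k.+1 s).
    apply/hasPn => y /(nthP x0) [i] hi <-.
    have [hi1 hi2] : (i < k.+1)%N /\ (i < size s)%N.
      move: hi; rewrite size_take; case: ifP => h1 h2.
        by split => //; exact: (ltn_trans h2 h1).
      split => //; apply: (leq_trans h2); by rewrite leqNgt h1.
    rewrite nth_take // -ltNge; apply: (le_lt_trans _ H2); apply: mono => //.
  rewrite has_count -leqNgt leqn0 => /eqP H0.
  move: H; rewrite -count_cat cat_take_drop -[X in count _ X](cat_take_drop k.+1 s) count_cat H0 add0n.
  have := count_size (fun y => t <= y) (drop k.+1 s); rewrite size_drop.
  move=> h1 h2; have := leq_trans h2 h1.
  rewrite subnS; move: ks; rewrite -subn_gt0; case: (size s - k) => // m _ /=; by rewrite ltnn.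
Qed.

Lemma val_eq (u v : X) : (forall t, (t <= u) = (t <= v)) -> u = v.
Proof.
move=> H; apply/le_anti/andP; split; first by rewrite -H.
by rewrite H.
Qed.

Lemma nth_sort_thr (s : seq X) x0 k t : (k < size s)%N ->
  (t <= nth x0 (sort <=%O s) k) = leq (size s - k) (count (fun y => t <= y) s).
Proof.
move=> ks; rewrite sorted_thr ?size_sort ?sort_le_sorted //.
by rewrite (permP (permEl (perm_sort _ s))).
Qed.

Lemma count_sum (T : Type) (r : seq T) (P : pred T) : count P r = \sum_(i <- r) P i.
Proof. by elim: r => [|i r IH] /=; rewrite ?big_nil ?big_cons // IH. Qed.

Lemma half_odd N : odd N -> N = (N./2).*2.+1.
Proof. by move=> o; rewrite -[in LHS](odd_double_half N) o. Qed.

Lemma med_thr j (x : 'I_j.*2.+1 -> X) t :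
  (t <= @med d X j x) = leq j.+1 (\sum_i ((t <= x i)%O : nat)).
Proof.
rewrite /med /kth_smallest /= nth_sort_thr; last by rewrite size_codom card_ord -addnn; lia.
rewrite size_codom card_ord codomE count_map count_sum big_enum /=.
have -> : (j.*2.+1 - j = j.+1)%N by rewrite -addnn; lia.
by [].
Qed.

Definition F m (w : 'I_m.+1 -> nat) : op X m.+1 := fun x =>
  nth (x ord0) (sort <=%O (flatten [seq nseq (w i) (x i) | i <- index_enum 'I_m.+1]))
    (\sum_i w i)./2.

Lemma flat_count (I : Type) (w : I -> nat) (x : I -> X) (r : seq I) (P : pred X) :
  count P (flatten [seq nseq (w i) (x i) | i <- r]) = \sum_(i <- r) w i * P (x i).
Proof.
elim: r => [|i r IH] /=; rewrite ?big_nil ?big_cons // count_cat IH count_nseq.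
by rewrite mulnC.
Qed.

Lemma flat_size (I : Type) (w : I -> nat) (x : I -> X) (r : seq I) :
  size (flatten [seq nseq (w i) (x i) | i <- r]) = \sum_(i <- r) w i.
Proof.
by elim: r => [|i r IH] /=; rewrite ?big_nil ?big_cons // size_cat IH size_nseq.
Qed.

Lemma F_thr m (w : 'I_m.+1 -> nat) x t : odd (\sum_i w i) ->
  (t <= F w x) = leq ((\sum_i w i)./2).+1 (\sum_i w i * ((t <= x i)%O : nat)).
Proof.
move=> o; rewrite /F nth_sort_thr flat_size ?flat_count //.
  by rewrite {1}(half_odd o); congr leq; lia.
by rewrite {2}(half_odd o); lia.
Qed.

Lemma sum_delta n (p : 'I_n) (c : 'I_n -> nat) : \sum_i (i == p) * c i = c p.
Proof.
rewrite (bigD1 p) //= eqxx mul1n big1 ?addn0 // => i /negbTE ->; by rewrite mul0n.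
Qed.

Lemma sum_lin n (a : 'I_n -> nat) (c : nat) p f :
  \sum_i (a i * c + (i == p)) * f i = (\sum_i a i * f i) * c + f p.
Proof.
rewrite -sum_delta big_distrl -big_split /=; apply: eq_bigr => i _.
by rewrite mulnDl mulnAC.
Qed.

Lemma odd_sum_ex n (w : 'I_n -> nat) : odd (\sum_i w i) -> exists i, odd (w i).
Proof.
move=> o; apply/existsP; apply: contraLR o => /existsPn H.
elim/big_ind: _ => //; first by move=> a b /negbTE ha /negbTE hb; rewrite oddD ha hb.
Qed.

Definition g3 n (f0 f1 f2 : op X n) : 'I_3 -> op X n :=
  fun j => if val j == 0%N then f0 else if val j == 1%N then f1 else f2.

Lemma med1_thr (y : 'I_3 -> X) t :
  (t <= @med d X 1 y) = leq 2 ((t <= y ord0)%O + (t <= y (inord 1))%O + (t <= y (inord 2))%O).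
Proof.
rewrite med_thr !big_ord_recr big_ord0 /=.
have e1 : (widen_ord (leqnSn 2) (widen_ord (leqnSn 1) ord_max)) = ord0 :> 'I_3 by apply/val_inj.
have e2 : (widen_ord (leqnSn 2) ord_max) = inord 1 :> 'I_3 by apply/val_inj; rewrite /= inordK.
have e3 : (ord_max : 'I_3) = inord 2 by apply/val_inj; rewrite /= inordK.
by rewrite e1 e2 e3.
Qed.

Lemma main_ind (C : opset X) : is_clone C -> C 3 (@med d X 1) ->
  forall m N k (w : 'I_m.+1 -> nat), (\sum_i w i <= N)%N -> (\sum_i (odd (w i) : nat) <= k)%N ->
  odd (\sum_i w i) -> C m.+1 (F w).
Proof.
case=> C0 Cp Cc h3 m N; elim: N => [|N IHN] k w.
  by rewrite leqn0 => /eqP ->.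
elim: k w => [|k IHk] w hN hk ho.
  have [i oi] := odd_sum_ex ho.
  move: hk; rewrite leqn0 => /eqP/eqP; rewrite sum_nat_eq0 => /forall_inP/(_ i isT).
  by rewrite oi.
case: (boolP [exists p, exists q, (p != q) && odd (w p) && odd (w q)]).
- case/existsP => p /existsP [q /andP [/andP [pq op] oq]].
  pose w0 i := (w i - (i == p) - (i == q))%N.
  pose wp i := (w0 i + (i == p) * 2)%N.
  pose wq i := (w0 i + (i == q) * 2)%N.
  have wp1 : (0 < w p)%N by case: (w p) op.
  have wq1 : (0 < w q)%N by case: (w q) oq.
  have ew : forall i, w i = (w0 i + (i == p) + (i == q))%N.
    move=> i; rewrite /w0; case: (eqVneq i p) => [->|ip].
      by rewrite (negbTE pq) /=; lia.
    case: (eqVneq i q) => [->|iq] /=; lia.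
  have sumw : forall f : 'I_m.+1 -> nat,
      (\sum_i w i * f i = \sum_i w0 i * f i + f p + f q)%N.
    move=> f; rewrite -[f p]sum_delta -[f q]sum_delta -!big_split /=.
    by apply: eq_bigr => i _; rewrite ew !mulnDl.
  have sump : forall f : 'I_m.+1 -> nat,
      (\sum_i wp i * f i = \sum_i w0 i * f i + f p * 2)%N.
    move=> f; rewrite -[f p]sum_delta big_distrl -big_split /=.
    by apply: eq_bigr => i _; rewrite /wp mulnDl mulnAC.
  have sumq : forall f : 'I_m.+1 -> nat,
      (\sum_i wq i * f i = \sum_i w0 i * f i + f q * 2)%N.
    move=> f; rewrite -[f q]sum_delta big_distrl -big_split /=.
    by apply: eq_bigr => i _; rewrite /wq mulnDl mulnAC.
  have one : forall (v : 'I_m.+1 -> nat), \sum_i v i = \sum_i v i * 1.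
    by move=> v; apply: eq_bigr => i _; rewrite muln1.
  have Sw := sumw (fun _ => 1%N); have Sp := sump (fun _ => 1%N); have Sq := sumq (fun _ => 1%N).
  rewrite /= -!one in Sw Sp Sq.
  have o0 : odd (\sum_i w0 i) by move: ho; rewrite Sw !addn1 /= negbK.
  have op' : odd (\sum_i wp i) by rewrite Sp mul1n addn2 /= negbK.
  have oq' : odd (\sum_i wq i) by rewrite Sq mul1n addn2 /= negbK.
  have -> : F w = @Defs.comp X 3 m.+1 (@med d X 1) (g3 (F wp) (F wq) (F w0)).
    apply: functional_extensionality => x; apply: val_eq => t.
    rewrite /Defs.comp med1_thr /g3 /= !inordK //= !F_thr // !sumw !sump !sumq.
    rewrite Sw Sp Sq (half_odd o0).
    set A := \sum_i w0 i * _; set h := (\sum_i w0 i)./2.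
    have : (A <= (h.*2.+1))%N.
      rewrite -(half_odd o0) /A; apply: leq_sum => i _; case: (t <= x i)%O; lia.
    have e1 : (h.*2.+1 + 1 + 1)./2 = h.+1.
      by rewrite (_ : _ + 1 + 1 = true + h.+1.*2) ?half_bit_double // doubleS; lia.
    have e2 : (h.*2.+1 + 1 * 2)./2 = h.+1.
      by rewrite (_ : _ + 1 * 2 = true + h.+1.*2) ?half_bit_double // doubleS; lia.
    have e3 : (h.*2.+1)./2 = h.
      by rewrite (_ : h.*2.+1 = true + h.*2) ?half_bit_double.
    move: e1 e2 e3.
    case: (t <= x p)%O; case: (t <= x q)%O => /=; lia.
  have key : forall r s, r != s -> odd (w r) -> odd (w s) ->
      (forall i, w i = w0 i + (i == r) + (i == s))%N ->
      (\sum_i (odd (w0 i + (i == r) * 2) : nat) < \sum_i (odd (w i) : nat))%N.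
    move=> r s' rs or os e.
    rewrite (bigD1 r) //= [X in (_ < X)%N](bigD1 r) //= or eqxx.
    have er := e r; rewrite eqxx (negbTE rs) addn0 in er.
    have -> : odd (w0 r + 1 * 2) = false.
      by move: or; rewrite er !oddD /=; case: (odd (w0 r)).
    rewrite add0n add1n ltnS; apply: leq_sum => i ir.
    rewrite (negbTE ir) mul0n addn0 (e i) (negbTE ir) addn0.
    case: (eqVneq i s') => [-> | _]; last by rewrite addn0.
    move: os; rewrite (e s') eqxx eq_sym (negbTE rs) addn0 !oddD /=; by case: (odd (w0 s')).
  apply: Cc => // j; rewrite /g3; case: ifP => _; [|case: ifP => _].
  - apply: (IHk wp) => //; first by rewrite Sp; move: hN; rewrite Sw; lia.
    rewrite -ltnS; apply: leq_trans hk; exact: (key p q pq op oq ew).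
  - apply: (IHk wq) => //; first by rewrite Sq; move: hN; rewrite Sw; lia.
    rewrite -ltnS; apply: leq_trans hk; apply: (key q p) => //; first by rewrite eq_sym.
    by move=> i; rewrite ew addnAC.
  - apply: (IHN (\sum_i (odd (w0 i) : nat))) => //.
    move: hN; rewrite Sw; lia.
- move=> H.
  have [x0 ox] := odd_sum_ex ho.
  have ev : forall i, i != x0 -> ~~ odd (w i).
    move=> i ix; apply/negP => oi; move/negP: H; apply; apply/existsP; exists i.
    by apply/existsP; exists x0; rewrite ix oi ox.
  pose h i := (w i)./2.
  have eh : forall i, w i = (h i * 2 + (i == x0))%N.
    move=> i; rewrite /h muln2 -[in LHS](odd_double_half (w i)).
    case: (eqVneq i x0) => [->|ix]; first by rewrite ox addnC.
    by rewrite (negbTE (ev i ix)) add0n addn0.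
  have Sum : forall f : 'I_m.+1 -> nat, (\sum_i w i * f i = (\sum_i h i * f i) * 2 + f x0)%N.
    by move=> f; rewrite -sum_lin; apply: eq_bigr => i _; rewrite -eh.
  have one : forall (v : 'I_m.+1 -> nat), \sum_i v i = \sum_i v i * 1.
    by move=> v; apply: eq_bigr => i _; rewrite muln1.
  have Sw := Sum (fun _ => 1%N); rewrite /= -!one in Sw.
  set S := \sum_i h i in Sw.
  have hS : (S * 2 + 1 <= N.+1)%N by rewrite -Sw.
  have eS : (S * 2 + 1)./2 = S by rewrite (_ : _ + 1 = true + S.*2) ?half_bit_double // -muln2; lia.
  have leB : forall (t : X) (x : 'I_m.+1 -> X), (\sum_i h i * ((t <= x i)%O : nat) <= S)%N.
    move=> t x; rewrite /S; apply: leq_sum => i _; case: (t <= x i)%O; lia.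
  case: (eqVneq S 0) => [S0|Sn0].
    have -> : F w = proj x0.
      apply: functional_extensionality => x; apply: val_eq => t.
      rewrite F_thr // Sum Sw eS /proj S0; have := leB t x; rewrite S0.
      case: (t <= x x0)%O; lia.
    exact: Cp.
  case oS: (odd S).
    have -> : F w = F h.
      apply: functional_extensionality => x; apply: val_eq => t.
      rewrite F_thr // F_thr // Sum Sw eS; have := leB t x; have := half_odd oS.
      rewrite -/S; case: (t <= x x0)%O; lia.
    apply: (IHN (\sum_i (odd (h i) : nat))) => //; lia.
  pose h' i := (h i * 1 + (i == x0))%N.
  have Sh := sum_lin h 1 x0 (fun _ => 1%N); rewrite /= -!one -/S in Sh.
  have oS' : odd (\sum_i h' i) by rewrite /h' Sh muln1 addn1 /= oS.
  have eS' : (S * 1 + 1)./2 = S./2.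
    have := odd_double_half S; rewrite oS add0n => e.
    by rewrite (_ : _ + 1 = true + (S./2).*2) ?half_bit_double //; lia.
  have -> : F w = F h'.
    apply: functional_extensionality => x; apply: val_eq => t.
    rewrite F_thr // F_thr // Sum Sw eS sum_lin Sh eS'; have := leB t x.
    have := odd_double_half S; rewrite oS add0n.
    rewrite -/S; case: (t <= x x0)%O; lia.
  apply: (IHN (\sum_i (odd (h' i) : nat))) => //; rewrite /h' Sh; lia.
Qed.

Lemma med1_in (C : opset X) b : is_clone C -> (1 <= b)%N -> C b.*2.+1 (@med d X b) ->
  C 3 (@med d X 1).
Proof.
case=> C0 Cp Cc hb1 hb.
pose sel (i : 'I_b.*2.+1) : 'I_3 :=
  inord (if (i < b)%N then 0 else if (i < b.*2)%N then 1 else 2)%N.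
have -> : @med d X 1 = @Defs.comp X _ 3 (@med d X b) (fun i => proj (sel i)).
  apply: functional_extensionality => x; apply: val_eq => t.
  rewrite /Defs.comp /proj med1_thr med_thr.
  pose G n := ((t <= x (inord (if (n < b)%N then 0 else if (n < b.*2)%N then 1 else 2)%N))%O : nat).
  rewrite (_ : \sum_(i < b.*2.+1) _ = \sum_(0 <= i < b.*2.+1) G i); last by rewrite big_mkord.
  have L1 : (b <= b.*2)%N by rewrite -addnn leq_addr.
  have L2 : (b.*2 <= b.*2.+1)%N by [].
  rewrite (big_cat_nat (leq0n b)) ?(leq_trans L1 L2) //= (big_cat_nat L1 L2) //=.
  rewrite (eq_big_nat _ _ (F2 := fun _ => (t <= x (inord 0))%O : nat)); last first.
    by move=> i /andP [_ h]; rewrite /G h.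
  rewrite [X in (_ + (X + _))%N](eq_big_nat _ _ (F2 := fun _ => (t <= x (inord 1))%O : nat)); last first.
    by move=> i /andP [h1 h2]; rewrite /G ltnNge h1 /= h2.
  rewrite [X in (_ + (_ + X))%N](eq_big_nat _ _ (F2 := fun _ => (t <= x (inord 2))%O : nat)); last first.
    move=> i /andP [h1 h2]; rewrite /G ltnNge (leq_trans L1 h1) /= ltnNge h1 //.
  rewrite !sum_nat_const_nat.
  have -> : (ord0 : 'I_3) = inord 0 by apply/val_inj; rewrite /= inordK.
  have e1 : (b - 0 = b)%N by rewrite subn0.
  have e2 : (b.*2 - b = b)%N by rewrite -addnn addnK.
  have e3 : (b.*2.+1 - b.*2 = 1)%N by rewrite subSn // subnn.
  rewrite e1 e2 e3.
  case: (t <= x (inord 0))%O; case: (t <= x (inord 1))%O; case: (t <= x (inord 2))%O => /=; lia.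
by apply: Cc => // i.
Qed.

Lemma med_is_F a : @med d X a = F (fun _ : 'I_a.*2.+1 => 1%N).
Proof.
apply: functional_extensionality => x; apply: val_eq => t.
have S1 : (\sum_(i < a.*2.+1) 1 = a.*2.+1)%N by rewrite sum1_card card_ord.
rewrite med_thr F_thr; last by rewrite S1 /= odd_double.
have e : (a.*2.+1)./2 = a by rewrite (_ : a.*2.+1 = true + a.*2) ?half_bit_double.
rewrite S1 e.
by under [X in _ = (_ < X)%N]eq_bigr do rewrite mul1n.
Qed.
End S.

Theorem mainTheorem1 (d : Order.disp_t) (X : orderType d) (a b : nat) :
  (1 <= a)%N -> (1 <= b)%N ->
  gen_clone (single_op (@med d X b)) (@med d X a).
Proof.
move=> ha hb C hC hF.
have Cb : C b.*2.+1 (@med d X b) by apply: hF; exists erefl.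
have C3 := med1_in hC hb Cb.
rewrite med_is_F.
apply: (main_ind hC C3 (N := \sum_(i < a.*2.+1) 1) (k := \sum_(i < a.*2.+1) (odd 1 : nat))) => //.
by rewrite sum1_card card_ord /= odd_double.
Qed.
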